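(* Let $f:\mathbb{R}^d\to\mathbb{R}$ be convex with minimizer $\boldsymbol x_0=\mathop{\mathrm{argmin}}_{\boldsymbol x}f(\boldsymbol x)$, and suppose there exist $\rho>0$ and $r>0$ such that $f$ is twice differentiable on $B(\boldsymbol x_0,r)$ with $\nabla^2f(\boldsymbol x)\succeq\rho\boldsymbol I$ for all $\boldsymbol x\in B(\boldsymbol x_0,r)$. Then $$\|\boldsymbol u\|_2\ge\rho\min\{\|\boldsymbol x-\boldsymbol x_0\|_2,r\},\qquad\forall\boldsymbol u\in\partial f(\boldsymbol x),\ \boldsymbol x\in\mathbb{R}^d.$$ If moreover $g:\mathbb{R}^d\to\mathbb{R}$ is convex and $\lambda$-Lipschitz (w.r.t. $\|\cdot\|_2$) for some $\lambda<\rho r$, then $f+g$ has a unique minimizer and it belongs to $B(\boldsymbol x_0,\lambda/\rho)$.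
   Context: $B(\boldsymbol x,r)$ is the closed Euclidean ball; $\partial f$ is the subdifferential. *)

(* Defs.v *)
From HB Require Import structures.
From mathcomp Require Import all_boot all_order all_algebra.
From mathcomp Require Import all_classical all_reals all_analysis.
Set Implicit Arguments. Unset Strict Implicit. Unset Printing Implicit Defensive.
Import Order.TTheory GRing.Theory Num.Theory.
Import numFieldNormedType.Exports.
Local Open Scope ring_scope.
Local Open Scope classical_set_scope.

Section Defs.
Variables (R : realType) (d : nat).
Notation V := 'rV[R]_d.

Definition dot (x y : V) : R := \sum_(i < d) x ord0 i * y ord0 i.
Definition norm2 (x : V) : R := Num.sqrt (dot x x).

Definition cball2 (x : V) (r : R) : set V := [set y | norm2 (y - x) <= r].

Definition convex_fun (f : V -> R) : Prop :=
  forall (x y : V) (t : R), 0 <= t -> t <= 1 ->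
    f (t *: x + (1 - t) *: y) <= t * f x + (1 - t) * f y.

Definition subgrad (f : V -> R) (x u : V) : Prop :=
  forall y : V, f x + dot u (y - x) <= f y.

Definition is_minimizer (f : V -> R) (x : V) : Prop := forall y : V, f x <= f y.

(* f is twice (Frechet) differentiable at x: f is differentiable on a
   neighbourhood of x and its differential y |-> Df(y) is differentiable at x
   (tested on each direction v, which is equivalent in finite dimension). *)
Definition twice_differentiable_at (f : V -> R) (x : V) : Prop :=
  (\forall y \near x, differentiable f y) /\
  (forall v : V, differentiable (fun y => 'd f y v) x).

Definition hessian (f : V -> R) (x v w : V) : R := 'd (fun y => 'd f y v) x w.

Definition hessian_ge (f : V -> R) (x : V) (rho : R) : Prop :=
  forall v : V, rho * dot v v <= hessian f x v v.

Definition lipschitz2 (g : V -> R) (lam : R) : Prop :=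
  forall x y : V, `|g x - g y| <= lam * norm2 (x - y).
End Defs.

(* Main.v *)
Require Import Defs.
From HB Require Import structures.
From mathcomp Require Import all_boot all_order all_algebra.
From mathcomp Require Import all_classical all_reals all_analysis.
From mathcomp Require Import lra ring.
Import Order.TTheory GRing.Theory Num.Theory.
Import numFieldNormedType.Exports.
Set Implicit Arguments. Unset Strict Implicit. Unset Printing Implicit Defensive.
Local Open Scope ring_scope.
Local Open Scope classical_set_scope.

Section Alg.
Variables (R : realType) (d : nat).
Implicit Types (x y z u v : 'rV[R]_d) (a b : R).

Lemma dotC x y : dot x y = dot y x.
Proof. by apply: eq_bigr => i _; rewrite mulrC. Qed.
Lemma dotDl x y z : dot (x + y) z = dot x z + dot y z.
Proof. by rewrite /dot -big_split; apply: eq_bigr => i _; rewrite !mxE mulrDl. Qed.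
Lemma dotZl a x y : dot (a *: x) y = a * dot x y.
Proof. by rewrite /dot mulr_sumr; apply: eq_bigr => i _; rewrite !mxE mulrA. Qed.
Lemma dotNl x y : dot (- x) y = - dot x y.
Proof. by rewrite -scaleN1r dotZl mulN1r. Qed.
Lemma dotBl x y z : dot (x - y) z = dot x z - dot y z.
Proof. by rewrite dotDl dotNl. Qed.
Lemma dotDr x y z : dot z (x + y) = dot z x + dot z y.
Proof. by rewrite dotC dotDl !(dotC z). Qed.
Lemma dotZr a x y : dot y (a *: x) = a * dot y x.
Proof. by rewrite dotC dotZl dotC. Qed.
Lemma dotBr x y z : dot z (x - y) = dot z x - dot z y.
Proof. by rewrite dotC dotBl !(dotC z). Qed.
Lemma dot0l x : dot 0 x = 0.
Proof. by rewrite -(scale0r 0) dotZl mul0r. Qed.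
Lemma dot_ge0 x : 0 <= dot x x.
Proof. by apply: sumr_ge0 => i _; rewrite -expr2 sqr_ge0. Qed.
Lemma dot_eq0 x : dot x x = 0 -> x = 0.
Proof.
move=> /eqP; rewrite psumr_eq0; last by move=> i _; rewrite -expr2 sqr_ge0.
move=> /allP H; apply/rowP => i; rewrite mxE.
have /H : i \in index_enum 'I_d by rewrite mem_index_enum.
by rewrite /= mulf_eq0 orbb => /eqP.
Qed.
Lemma norm2_ge0 x : 0 <= norm2 x.
Proof. exact: sqrtr_ge0. Qed.
Lemma norm2_sq x : norm2 x ^+ 2 = dot x x.
Proof. by rewrite sqr_sqrtr // dot_ge0. Qed.
Lemma norm2_le x a : 0 <= a -> dot x x <= a ^+ 2 -> norm2 x <= a.
Proof.
move=> a0 h; rewrite -(ler_pXn2r (_ : 0 < 2)%N) ?nnegrE ?norm2_ge0 //.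
by rewrite norm2_sq.
Qed.
Lemma norm2_eq0 x : norm2 x = 0 -> x = 0.
Proof. by move=> h; apply: dot_eq0; rewrite -norm2_sq h expr0n. Qed.
Lemma norm2Z a x : norm2 (a *: x) = `|a| * norm2 x.
Proof. by rewrite /norm2 dotZl dotZr mulrA sqrtrM ?sqr_ge0 // -expr2 sqrtr_sqr. Qed.
Lemma norm20 : norm2 (0 : 'rV[R]_d) = 0.
Proof. by rewrite /norm2 dot0l sqrtr0. Qed.

Lemma CS x y : dot x y <= norm2 x * norm2 y.
Proof.
have [a0|] := eqVneq (norm2 x) 0.
  by rewrite (norm2_eq0 a0) dot0l norm20 mul0r.
have [b0|] := eqVneq (norm2 y) 0.
  by rewrite (norm2_eq0 b0) dotC dot0l norm20 mulr0.
move=> nb na.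
have ha : 0 < norm2 x by rewrite lt_def na norm2_ge0.
have hb : 0 < norm2 y by rewrite lt_def nb norm2_ge0.
have := dot_ge0 (norm2 y *: x - norm2 x *: y).
rewrite !(dotBl, dotBr, dotZl, dotZr) -!norm2_sq (dotC y x).
set a := norm2 x; set b := norm2 y; set c := dot x y => h.
have hab : 0 < a * b by rewrite mulr_gt0.
rewrite -(ler_pM2l hab); nra.
Qed.

Lemma norm2N x : norm2 (- x) = norm2 x.
Proof. by rewrite -scaleN1r norm2Z normrN normr1 mul1r. Qed.
Lemma norm2D x y : norm2 (x + y) <= norm2 x + norm2 y.
Proof.
apply: norm2_le; first by rewrite addr_ge0 ?norm2_ge0.
rewrite !(dotDl, dotDr) (dotC y x) -!norm2_sq.
have := CS x y; have := norm2_ge0 x; have := norm2_ge0 y; nra.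
Qed.
Lemma norm2B_sym x y : norm2 (x - y) = norm2 (y - x).
Proof. by rewrite -norm2N opprB. Qed.
Lemma norm2_rev x y : `|norm2 x - norm2 y| <= norm2 (x - y).
Proof.
rewrite ler_norml; apply/andP; split.
  have := norm2D (y - x) x; rewrite subrK norm2B_sym => h.
  lra.
by have := norm2D (x - y) y; rewrite subrK; lra.
Qed.
Lemma coord_le_norm2 x i : `|x ord0 i| <= norm2 x.
Proof.
rewrite -sqrtr_sqr; apply: ler_wsqrtr.
rewrite /dot (bigD1 i) //= expr2 lerDl; apply: sumr_ge0 => j _.
by rewrite -expr2 sqr_ge0.
Qed.
Lemma coord_le_mx x i : `|x ord0 i| <= `|x|.
Proof.
rewrite [leRHS]/Num.norm /= mx_normrE; apply/bigmax_geP; right => /=.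
by exists (ord0, i).
Qed.
Lemma mx_le_norm2 x : `|x| <= norm2 x.
Proof.
rewrite [leLHS]/Num.norm /= mx_normrE; apply: bigmax_le; first exact: norm2_ge0.
by move=> [i j] _ /=; rewrite (ord1 i); exact: coord_le_norm2.
Qed.
Lemma norm2_le_mx x : norm2 x <= d%:R * `|x|.
Proof.
apply: norm2_le; first by rewrite mulr_ge0.
have h : dot x x <= d%:R * `|x| ^+ 2.
  rewrite /dot -[d in d%:R]card_ord -sum1_card natr_sum mulr_suml.
  apply: ler_sum => i _; rewrite mul1r -expr2 -real_normK ?num_real //.
  by rewrite lerXn2r ?nnegrE ?coord_le_mx.
apply: le_trans h _; rewrite exprMn; apply: ler_wpM2r; first exact: sqr_ge0.
case: d => [|n]; first by rewrite expr0n.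
by rewrite expr2 ler_peMl // ler1n.
Qed.
End Alg.

Section Line.
Variables (R : realType) (d : nat).
Notation V := 'rV[R]_d.

Lemma line_fun_eq (F : V -> R) (p v : V) (t : R) :
  (fun h : R => h^-1 *: (((fun s : R => F (p + s *: v)) \o shift t) (h *: (1:R)) - F (p + t *: v)))
  = (fun h : R => h^-1 *: ((F \o shift (p + t *: v)) (h *: v) - F (p + t *: v))).
Proof.
apply: funext => h /=. congr (_ *: (F _ - _)).
by rewrite [h%:A]mulr1 scalerDl addrCA.
Qed.

Lemma line_is_derive (F : V -> R) (p v : V) (t : R) :
  derivable F (p + t *: v) v ->
  is_derive t 1 (fun s => F (p + s *: v)) ('D_v F (p + t *: v)).
Proof.
move=> hd; split.
  by rewrite /derivable line_fun_eq.
by rewrite /derive line_fun_eq.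
Qed.
End Line.

Section OneD.
Variables (R : realType) (phi D1 D2 : R -> R) (a b c : R).
Hypothesis H : forall s, a <= s <= b ->
  [/\ is_derive s 1 phi (D1 s), is_derive s 1 D1 (D2 s) & c <= D2 s].

Lemma mvt_gen (F dF : R -> R) s t :
  (forall x, a <= x <= b -> is_derive x 1 F (dF x)) ->
  a <= s -> s < t -> t <= b ->
  exists2 xi, s < xi < t & F t - F s = dF xi * (t - s).
Proof.
move=> hF hs st tb.
have hin : forall x, s <= x <= t -> a <= x <= b.
  by move=> x /andP[h1 h2]; apply/andP; split; [apply: le_trans h1|apply: le_trans tb].
have hd : forall x, x \in `]s, t[%R -> is_derive x 1 F (dF x).
  move=> x; rewrite in_itv /= => /andP[h1 h2]; apply: hF; apply: hin.
  by rewrite !ltW.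
have hc : {within `[s, t], continuous F}.
  apply: derivable_within_continuous => x; rewrite in_itv /= => hx.
  by have [] := hF x (hin x hx).
have [xi hxi ->] := MVT st hd hc.
by exists xi => //; move: hxi; rewrite in_itv.
Qed.

Lemma mono1 s t : a <= s -> s <= t -> t <= b -> c * (t - s) <= D1 t - D1 s.
Proof.
move=> hs; rewrite le_eqVlt => /predU1P[<- _|st tb]; first by rewrite !subrr mulr0.
have [xi /andP[h1 h2] ->] := mvt_gen (F:=D1) (dF:=D2) (fun x hx => let: And3 _ h _ := H hx in h) hs st tb.
have hxi : a <= xi <= b by rewrite (le_trans hs (ltW h1)) (le_trans (ltW h2) tb).
have [_ _ hc] := H hxi.
by rewrite ler_wpM2r // subr_ge0 ltW.
Qed.

Lemma mvt1 s t : a <= s -> s < t -> t <= b ->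
  exists2 xi, s < xi < t & phi t - phi s = D1 xi * (t - s).
Proof. exact: mvt_gen (fun x hx => let: And3 h _ _ := H hx in h). Qed.
End OneD.

Lemma close_lemma (R : realType) (c0 rho m : R) : 0 < rho -> 0 < m ->
  (forall tau, 0 <= tau -> tau < m -> rho * tau <= c0) -> rho * m <= c0.
Proof.
move=> hr hm h; rewrite leNgt; apply/negP => hlt.
have [c0n|c0p] := ltP c0 0.
  by have := h 0 (lexx _) hm; rewrite mulr0 => /(lt_le_trans c0n); rewrite ltxx.
have e : rho * ((c0 / rho + m) / 2) = (c0 + rho * m) / 2.
  by rewrite mulrA mulrDr mulrCA divff ?mulr1 // gt_eqF.
have h0 : 0 <= (c0 / rho + m) / 2 by rewrite divr_ge0 // addr_ge0 ?divr_ge0 // ltW.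
have h1 : c0 / rho < m by rewrite ltr_pdivrMr // mulrC.
have h2 : (c0 / rho + m) / 2 < m by lra.
have := h _ h0 h2; rewrite e; lra.
Qed.

Section Key.
Variables (R : realType) (phi D1 D2 : R -> R) (rho r : R).
Hypothesis H : forall s, - r <= s <= r ->
  [/\ is_derive s 1 phi (D1 s), is_derive s 1 D1 (D2 s) & rho <= D2 s].
Hypothesis hr : 0 < r.
Hypothesis hrho : 0 < rho.
Hypothesis hmin : forall t, phi 0 <= phi t.
Hypothesis hconv : forall x y l, 0 <= l -> l <= 1 ->
  phi (l * x + (1 - l) * y) <= l * phi x + (1 - l) * phi y.

Lemma D10 : D1 0 = 0.
Proof.
have h0 : - r <= 0 <= r by rewrite oppr_le0 ltW.
have [hd _ _] := H h0.
have hm : is_derive (0:R) (1:R) phi (0:R).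
  apply: (@derive1_at_min _ phi (- r) r 0).
  - by rewrite -subr_ge0 opprK ltW // addr_gt0.
  - move=> t; rewrite in_itv /= => /andP[h1 h2].
    have ht : - r <= t <= r by rewrite !ltW.
    by have [[]] := H ht.
  - by rewrite in_itv /= oppr_lt0 hr.
  - by move=> t _; apply: hmin.
by case: hd => _ <-; case: hm => _ ->.
Qed.

Lemma D1_ge t : 0 <= t -> t <= r -> rho * t <= D1 t.
Proof.
move=> h0 h1.
have := @mono1 R phi D1 D2 (- r) r rho H 0 t.
rewrite subr0 D10 subr0; apply => //; rewrite oppr_le0 ltW //.
Qed.

Lemma key_small s tau : 0 <= tau -> tau < s -> s <= r ->
  rho * tau * (s - tau) <= phi s - phi tau.
Proof.
move=> h0 h1 h2.
have hr0 : - r <= tau by rewrite (le_trans _ h0) // oppr_le0 ltW.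
have [xi /andP[x1 x2] ->] := @mvt1 R phi D1 D2 (- r) r rho H tau s hr0 h1 h2.
apply: ler_wpM2r; first by rewrite subr_ge0 ltW.
apply: le_trans (D1_ge _ _); first by rewrite ler_wpM2l // ltW.
  by rewrite (le_trans h0) // ltW.
by rewrite ltW // (lt_le_trans x2).
Qed.

Lemma key s tau : 0 <= tau -> tau < s -> tau < r ->
  rho * tau * (s - tau) <= phi s - phi tau.
Proof.
move=> h0 h1 h2.
have [sr|rs] := leP s r; first exact: key_small.
have hk := key_small h0 h2 (lexx r).
set l := (r - tau) / (s - tau).
have st : 0 < s - tau by rewrite subr_gt0.
have hl0 : 0 < l by rewrite divr_gt0 // subr_gt0.
have hl1 : l <= 1 by rewrite ler_pdivrMr // mul1r; lra.
have el : l * (s - tau) = r - tau by rewrite divfK // gt_eqF.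
have er : l * s + (1 - l) * tau = r.
  have : l * s + (1 - l) * tau = tau + l * (s - tau) by ring.
  by rewrite el => ->; ring.
have hc := hconv s tau (ltW hl0) hl1; rewrite er in hc.
have : l * (rho * tau * (s - tau)) <= l * (phi s - phi tau).
  have -> : l * (rho * tau * (s - tau)) = rho * tau * (r - tau) by rewrite -el; ring.
  lra.
by rewrite ler_pM2l.
Qed.
End Key.

Lemma strict_mid (R : realType) (phi D1 D2 : R -> R) (c : R) :
  (forall s : R, 0 <= s <= 1 ->
    [/\ is_derive s 1 phi (D1 s), is_derive s 1 D1 (D2 s) & c <= D2 s]) ->
  0 < c -> phi (2^-1) - phi 0 < phi 1 - phi (2^-1).
Proof.
move=> H hc.
have h0 : (0:R) <= 0 by [].
have h12 : (0:R) < 2^-1 by rewrite invr_gt0.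
have h21 : (2^-1 : R) < 1 by rewrite invf_lt1 // ltr1n.
have [a /andP[a1 a2] ->] := @mvt1 R phi D1 D2 0 1 c H 0 (2^-1) h0 h12 (ltW h21).
have [b /andP[b1 b2] ->] := @mvt1 R phi D1 D2 0 1 c H (2^-1) 1 (ltW h12) h21 (lexx _).
have := @mono1 R phi D1 D2 0 1 c H a b (ltW a1) (ltW (lt_trans a2 b1)) (ltW b2).
have : 0 < c * (b - a) by rewrite mulr_gt0 // subr_gt0 (lt_trans a2 b1).
have -> : (1 : R) - 2^-1 = 2^-1 - 0.
  by rewrite subr0 {1}(splitr 1) mul1r addrK.
rewrite subr0 => p q.
rewrite ltr_pM2r //; lra.
Qed.

Section Main.
Variables (R : realType) (d : nat) (f : 'rV[R]_d -> R) (x0 : 'rV[R]_d) (rho r : R).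
Notation V := 'rV[R]_d.
Hypothesis Hconv : convex_fun f.
Hypothesis Hmin : is_minimizer f x0.
Hypothesis hrho : 0 < rho.
Hypothesis hr : 0 < r.
Hypothesis Hball : forall x, cball2 x0 r x -> twice_differentiable_at f x /\ hessian_ge f x rho.

Lemma diff_ball x : cball2 x0 r x -> differentiable f x.
Proof. by move=> /Hball [[hn _] _]; exact: nbhs_singleton hn. Qed.

Lemma line_H (p v : V) (s : R) : cball2 x0 r (p + s *: v) ->
  [/\ is_derive s 1 (fun t => f (p + t *: v)) ('d f (p + s *: v) v),
      is_derive s 1 (fun t => 'd f (p + t *: v) v) (hessian f (p + s *: v) v v)
    & rho * dot v v <= hessian f (p + s *: v) v v].
Proof.
move=> hb; have hd := diff_ball hb.
have [[_ hd2] hh] := Hball hb.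
split.
- by have := line_is_derive (@diff_derivable _ _ _ _ _ v hd); rewrite deriveE.
- by have := line_is_derive (@diff_derivable _ _ _ _ _ v (hd2 v)); rewrite deriveE.
- exact: hh.
Qed.

Lemma line_conv (F : V -> R) (p v : V) : convex_fun F ->
  forall x y l, 0 <= l -> l <= 1 ->
  F (p + (l * x + (1 - l) * y) *: v) <= l * F (p + x *: v) + (1 - l) * F (p + y *: v).
Proof.
move=> hc x y l h0 h1.
have -> : p + (l * x + (1 - l) * y) *: v = l *: (p + x *: v) + (1 - l) *: (p + y *: v).
  rewrite !scalerDr !scalerA scalerDl addrACA -scalerDl.
  congr (_ + _); by rewrite -scalerDl addrC subrK scale1r.
exact: hc.
Qed.


Lemma unit_dir x : 0 < norm2 (x - x0) ->
  let e := (norm2 (x - x0))^-1 *: (x - x0) in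
  [/\ norm2 e = 1, dot e e = 1 & x = x0 + norm2 (x - x0) *: e].
Proof.
move=> sp e.
have he1 : norm2 e = 1.
  by rewrite /e norm2Z gtr0_norm ?invr_gt0 // mulVf // gt_eqF.
split => //; first by rewrite -norm2_sq he1 expr1n.
by rewrite /e scalerA divff ?gt_eqF // scale1r addrC subrK.
Qed.

Lemma ray_ball (e : V) t : norm2 e = 1 -> - r <= t <= r -> cball2 x0 r (x0 + t *: e).
Proof.
move=> he ht; rewrite /cball2 /= (addrC x0) addrK norm2Z he mulr1.
by rewrite ler_norml.
Qed.

Lemma ray_H (e : V) : norm2 e = 1 -> dot e e = 1 ->
  forall t, - r <= t <= r ->
  [/\ is_derive t 1 (fun t => f (x0 + t *: e)) ('d f (x0 + t *: e) e),
      is_derive t 1 (fun t => 'd f (x0 + t *: e) e) (hessian f (x0 + t *: e) e e)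
    & rho <= hessian f (x0 + t *: e) e e].
Proof.
move=> he hee t ht; have [h1 h2 h3] := line_H (ray_ball he ht).
by split => //; rewrite hee mulr1 in h3.
Qed.

Lemma ray_key (e : V) : norm2 e = 1 -> dot e e = 1 ->
  forall s tau, 0 <= tau -> tau < s -> tau < r ->
  rho * tau * (s - tau) <= f (x0 + s *: e) - f (x0 + tau *: e).
Proof.
move=> he hee s tau h0 h1 h2.
apply: (@key R (fun t => f (x0 + t *: e)) (fun t => 'd f (x0 + t *: e) e)
   (fun t => hessian f (x0 + t *: e) e e) rho r (ray_H he hee)) => //.
- by move=> t /=; rewrite scale0r addr0; apply: Hmin.
- exact: line_conv.
Qed.

Lemma part1 x u : subgrad f x u -> rho * Num.min (norm2 (x - x0)) r <= norm2 u.
Proof.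
move=> hs.
have [s0|sp] : norm2 (x - x0) = 0 \/ 0 < norm2 (x - x0).
  by have := norm2_ge0 (x - x0); rewrite le_eqVlt => /predU1P[<-|]; [left|right].
  by rewrite s0 min_l ?mulr0 ?norm2_ge0 // ltW.
have [he hee hx] := unit_dir sp.
move: he hee hx; set s := norm2 (x - x0); set e := s^-1 *: _ => he hee hx.
apply: (le_trans (y := dot u e)); last first.
  by apply: le_trans (CS u e) _; rewrite he mulr1.
apply: close_lemma => //; first by rewrite lt_min sp hr.
move=> tau h0; rewrite lt_min => /andP[h1 h2].
have hk := ray_key he hee h0 h1 h2.
have hsg := hs (x0 + tau *: e).
rewrite {1 2}hx opprD addrACA subrr add0r -scalerBl dotZr -hx in hsg.
have hst : 0 < s - tau by rewrite subr_gt0.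
rewrite -(ler_pM2r hst); rewrite -hx in hk; nra.
Qed.

End Main.

Section Topo.
Variables (R : realType) (d : nat).
Notation V := 'rV[R]_d.

Lemma lip_cont (G : V -> R) (L : R) : 0 <= L ->
  (forall a b, `|G a - G b| <= L * norm2 (a - b)) -> continuous G.
Proof.
move=> hL hG x; apply: (proj2 (@cvgrPdist_lt _ _ _ (nbhs x) (nbhs_filter x) G (G x))) => e e0.
have hD : 0 < L * d%:R + 1 by rewrite ltr_pwDr // mulr_ge0.
apply/(@nbhs_normP R V x); exists (e / (L * d%:R + 1)); first by rewrite /= divr_gt0.
move=> y /=; rewrite ltr_pdivlMr // => hy.
apply: le_lt_trans (hG x y) _.
apply: le_lt_trans (_ : L * (d%:R * `|x - y|) < e).
  by apply: ler_wpM2l => //; apply: norm2_le_mx.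
have h1 : 0 <= `|x - y| by [].
rewrite mulrA; apply: le_lt_trans hy.
by rewrite mulrC ler_wpM2l // lerDl.
Qed.

Lemma cball_compact (x0 : V) (r : R) : compact (cball2 x0 r).
Proof.
apply: bounded_closed_compact.
  rewrite /bounded_near.
  apply: filterS (nbhs_pinfty_ge (num_real (`|x0| + r))) => M hM x /= hx.
  apply: (le_trans (y := `|x0| + r)) => //.
  have -> : x = x0 + (x - x0) by rewrite addrC subrK.
  apply: le_trans (ler_normD _ _) _; rewrite lerD2l.
  exact: le_trans (mx_le_norm2 _) hx.
have -> : cball2 x0 r = (fun y => norm2 (y - x0)) @^-1` [set z | z <= r] by [].
apply: preimage_closed; last exact: closed_le.
move=> y _; apply: (@lip_cont _ 1) => // a b; rewrite mul1r.
by have := norm2_rev (a - x0) (b - x0); rewrite opprB addrA subrK.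
Qed.
End Topo.

Section Part2.
Variables (R : realType) (d : nat) (f : 'rV[R]_d -> R) (x0 : 'rV[R]_d) (rho r : R).
Notation V := 'rV[R]_d.
Hypothesis Hconv : convex_fun f.
Hypothesis Hmin : is_minimizer f x0.
Hypothesis hrho : 0 < rho.
Hypothesis hr : 0 < r.
Hypothesis Hball : forall x, cball2 x0 r x -> twice_differentiable_at f x /\ hessian_ge f x rho.
Variables (g : V -> R) (lam : R).
Hypothesis Hgc : convex_fun g.
Hypothesis hlam : 0 <= lam.
Hypothesis Hlip : lipschitz2 g lam.
Hypothesis hlr : lam < rho * r.

Let h := f \+ g.

Lemma lr_lt : lam / rho < r.
Proof. by rewrite ltr_pdivrMr // mulrC. Qed.

Lemma step x : lam / rho < norm2 (x - x0) ->
  exists z, h z < h x /\ norm2 (z - x0) < norm2 (x - x0).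
Proof.
move=> hs.
have sp : 0 < norm2 (x - x0) by apply: le_lt_trans hs; rewrite divr_ge0 // ltW.
have [he hee hx] := unit_dir sp.
move: he hee hx; set s := norm2 (x - x0); set e := s^-1 *: _ => he hee hx.
set m := Num.min s r.
have hm : lam / rho < m by rewrite lt_min hs lr_lt.
set tau := (lam / rho + m) / 2.
have ht1 : lam / rho < tau by rewrite /tau; lra.
have ht2 : tau < m by rewrite /tau; lra.
have hts : tau < s by apply: lt_le_trans ht2 _; rewrite ge_min lexx.
have htr : tau < r by apply: lt_le_trans ht2 _; rewrite ge_min lexx orbT.
have ht0 : 0 <= tau by apply: le_trans (ltW ht1); rewrite divr_ge0 // ltW.
exists (x0 + tau *: e); split; last first.
  by rewrite (addrC x0) addrK norm2Z he mulr1 ger0_norm.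
have hk := ray_key Hconv Hmin hrho hr Hball he hee ht0 hts htr.
rewrite -hx in hk.
have hg := Hlip (x0 + tau *: e) x.
rewrite {2}hx opprD addrACA subrr add0r -scalerBl norm2Z he mulr1 in hg.
rewrite [`|tau - s|]distrC (@gtr0_norm _ (s - tau)) ?subr_gt0 // in hg.
move: hg; rewrite ler_norml => /andP[_ hg].
have hl : lam < tau * rho by rewrite -ltr_pdivrMr.
have hp : 0 < (s - tau) * (tau * rho - lam) by rewrite mulr_gt0 // subr_gt0.
rewrite /h /=; nra.
Qed.

Lemma glob_in y : is_minimizer h y -> norm2 (y - x0) <= lam / rho.
Proof.
move=> hy; rewrite leNgt; apply/negP => /step [z [hz _]].
by have := hy z; rewrite leNgt hz.
Qed.

Lemma x0K : cball2 x0 r x0.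
Proof. by rewrite /cball2 /= subrr norm20 ltW. Qed.

Lemma h_cont : {within cball2 x0 r, continuous h}.
Proof.
apply: continuous_in_subspaceT => x; rewrite inE => hx.
apply: (@cvgD _ _ _ (nbhs x) (nbhs_filter x) f g).
  exact: differentiable_continuous (diff_ball Hball hx).
exact: (lip_cont hlam Hlip).
Qed.

Lemma exists_K : exists2 c, c \in cball2 x0 r & forall t, t \in cball2 x0 r -> h c <= h t.
Proof.
apply: EVT_min_rV; first by exists x0; exact: x0K.
  exact: cball_compact.
exact: h_cont.
Qed.

Lemma part2 : exists xs : V,
  [/\ is_minimizer (f \+ g) xs,
      (forall y, is_minimizer (f \+ g) y -> y = xs)
    & cball2 x0 (lam / rho) xs].
Proof.
have [c cK cmin] := exists_K.
rewrite inE in cK.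
have lr0 : 0 <= lam / rho by rewrite divr_ge0 // ltW.
have cin : norm2 (c - x0) <= lam / rho.
  rewrite leNgt; apply/negP => /step [z [hz hzl]].
  have zK : cball2 x0 r z by apply: le_trans (ltW hzl) cK.
  by have := cmin z (mem_set zK); rewrite leNgt hz.
have cglob : is_minimizer h c.
  move=> y; rewrite leNgt; apply/negP => hy.
  have hyc : y - c != 0.
    by apply/eqP => /eqP; rewrite subr_eq0 => /eqP yc; move: hy; rewrite yc ltxx.
  set N := norm2 (y - c).
  have Np : 0 < N.
    rewrite lt_def norm2_ge0 andbT; apply/eqP => /norm2_eq0 hh.
    by rewrite hh eqxx in hyc.
  set t := Num.min 1 ((r - lam / rho) / N).
  have hrl : 0 < r - lam / rho by rewrite subr_gt0 lr_lt.
  have t0 : 0 < t by rewrite lt_min ltr01 divr_gt0.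
  have t1 : t <= 1 by rewrite ge_min lexx.
  have tN : t * N <= r - lam / rho.
    by rewrite -ler_pdivlMr // ge_min lexx orbT.
  set z := t *: y + (1 - t) *: c.
  have hf := Hconv y c (ltW t0) t1.
  have hg := Hgc y c (ltW t0) t1.
  have zK : cball2 x0 r z.
    rewrite /cball2 /=.
    have -> : z - x0 = (c - x0) + t *: (y - c).
      by apply/rowP => i; rewrite !mxE; ring.
    apply: le_trans (norm2D _ _) _; rewrite norm2Z (ger0_norm (ltW t0)).
    rewrite -/N; lra.
  have := cmin z (mem_set zK).
  rewrite -/z in hf hg.
  have : 0 < t * (h c - h y) by rewrite mulr_gt0 // subr_gt0.
  rewrite /h /=; nra.
exists c; split => //.
  move=> y hy; have yin := glob_in hy.
  case: (eqVneq y c) => // hne; exfalso.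
  set v := y - c.
  have hv : 0 < dot v v.
    rewrite lt_def dot_ge0 andbT; apply/eqP => /dot_eq0 /eqP.
    by rewrite subr_eq0 (negbTE hne).
  have seg : forall s : R, 0 <= s <= 1 -> cball2 x0 r (c + s *: v).
    move=> s /andP[s0 s1]; rewrite /cball2 /=.
    have -> : c + s *: v - x0 = (1 - s) *: (c - x0) + s *: (y - x0).
      by apply/rowP => i; rewrite !mxE; ring.
    apply: le_trans (norm2D _ _) _; rewrite !norm2Z !ger0_norm ?subr_ge0 //.
    have : (1 - s) * norm2 (c - x0) <= (1 - s) * (lam / rho).
      by rewrite ler_wpM2l // subr_ge0.
    have : s * norm2 (y - x0) <= s * (lam / rho) by rewrite ler_wpM2l.
    have := lr_lt; lra.
  have Hs : forall s : R, 0 <= s <= 1 ->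
    [/\ is_derive s 1 (fun t => f (c + t *: v)) ('d f (c + s *: v) v),
        is_derive s 1 (fun t => 'd f (c + t *: v) v) (hessian f (c + s *: v) v v)
      & rho * dot v v <= hessian f (c + s *: v) v v].
    by move=> s hs; apply: (line_H Hball (seg s hs)).
  have := strict_mid Hs (mulr_gt0 hrho hv).
  rewrite /= scale0r addr0 scale1r /v (addrC c (y - c)) subrK.
  have em : c + 2^-1 *: (y - c) = 2^-1 *: y + (1 - 2^-1) *: c.
    by apply/rowP => i; rewrite !mxE; ring.
  rewrite em.
  have h2 : (0:R) <= 2^-1 by rewrite invr_ge0.
  have h21 : (2^-1 : R) <= 1 by rewrite invf_le1 // ler1n.
  have hg := Hgc y c h2 h21.
  have := cglob (2^-1 *: y + (1 - 2^-1) *: c).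
  have := hy c.
  rewrite /h /=; lra.
Qed.
End Part2.


Unset Implicit Arguments.

Theorem lemmaE2 (R : realType) (d : nat) (f : 'rV[R]_d -> R) (x0 : 'rV[R]_d)
    (rho r : R) :
  convex_fun f -> is_minimizer f x0 -> 0 < rho -> 0 < r ->
  (forall x, cball2 x0 r x -> twice_differentiable_at f x /\ hessian_ge f x rho) ->
  (forall (x u : 'rV[R]_d), subgrad f x u ->
     rho * Num.min (norm2 (x - x0)) r <= norm2 u) /\
  (forall (g : 'rV[R]_d -> R) (lam : R),
     convex_fun g -> 0 <= lam -> lipschitz2 g lam -> lam < rho * r ->
     exists xs : 'rV[R]_d,
       [/\ is_minimizer (f \+ g) xs,
           (forall y, is_minimizer (f \+ g) y -> y = xs)
         & cball2 x0 (lam / rho) xs]).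
Proof.
move=> hc hm hrho hr hb; split.
- move=> x u hs; by eapply part1; eassumption.
- move=> g lam hgc hlam hlip hlr; by eapply part2; eassumption.
Qed.
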